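(* Consider Algorithm ProxSAGA (described in the context) with minibatch size $b\le n$, $T\ge1$ iterations, and step size $\eta=\rho/L$, where $0<\rho<1/2$ satisfies $$\frac{16 n^2\rho^2}{b^3}+\rho\le 1 .$$ Then the output $x_a$ satisfies $$\mathbb E\big[\|\mathcal G_\eta(x_a)\|^2\big]\le \frac{2L\,(F(x^0)-F(x^* ))}{\rho(1-2\rho)\,T},$$ where $x^*$ is an optimal solution of $\min_x F(x)$.
   Context: Setting: Let $n,d\ge 1$ be integers and $[n]=\{1,\dots,n\}$. Let $f_1,\dots,f_n:\mathbb R^d\to\mathbb R$ be differentiable (possibly nonconvex) functions, each $L$-smooth for some $L>0$, i.e. $\|\nabla f_i(x)-\nabla f_i(y)\|\le L\|x-y\|$ for all $x,y\in\mathbb R^d$ and $i\in[n]$. Let $f=\frac1n\sum_{i=1}^n f_i$. Let $h:\mathbb R^d\to\mathbb R\cup\{+\infty\}$ be proper, lower semicontinuous and convex, with closed domain. Let $F=f+h$, and let $x^*$ be a global minimizer of $F$ on $\mathbb R^d$ (assumed to exist). For $\eta>0$, $\mathrm{prox}_{\eta h}(x):=\arg\min_{y\in\mathbb R^d}\big(h(y)+\frac1{2\eta}\|y-x\|^2\big)$, and the gradient mapping is $\mathcal G_\eta(x):=\frac1\eta\big[x-\mathrm{prox}_{\eta h}(x-\eta\nabla f(x))\big]$. Algorithm ProxSAGA$(x^0,T,b,\eta)$: Given $x^0\in\mathbb R^d$, positive integers $T,b$ and $\eta>0$, set $\alpha^0_i=x^0$ for all $i\in[n]$. For $t=0,1,\dots$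 let $g^t=\frac1n\sum_{i=1}^n\nabla f_i(\alpha^t_i)$. For $t=0,\dots,T-1$: draw two multisets $I_t,J_t$, each consisting of $b$ indices drawn independently and uniformly at random from $[n]$ (with replacement; $I_t$, $J_t$ independent of each other and of all previous draws); set $v^t=\frac1b\sum_{i\in I_t}\big(\nabla f_i(x^t)-\nabla f_i(\alpha^t_i)\big)+g^t$ and $x^{t+1}=\mathrm{prox}_{\eta h}(x^t-\eta v^t)$; set $\alpha^{t+1}_j=x^t$ for $j\in J_t$ and $\alpha^{t+1}_j=\alpha^t_j$ for $j\notin J_t$. The output $x_a$ is chosen uniformly at random from $\{x^0,\dots,x^{T-1}\}$. Expectations are over all randomness of the algorithm. *)

(* Defs.v *)
From Stdlib Require Import Reals.
From mathcomp Require Import all_boot.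
Set Implicit Arguments. Unset Strict Implicit. Unset Printing Implicit Defensive.
Open Scope R_scope.

Definition vec (d : nat) := 'I_d -> R.

Section Vec.
Variable d : nat.
Definition vadd (x y : vec d) : vec d := fun i => x i + y i.
Definition vsub (x y : vec d) : vec d := fun i => x i - y i.
Definition vscal (a : R) (x : vec d) : vec d := fun i => a * x i.
Definition vsum (I : finType) (F : I -> vec d) : vec d :=
  fun k => \big[Rplus/R0]_(i : I) F i k.
Definition dot (x y : vec d) : R := \big[Rplus/R0]_(i < d) (x i * y i).
Definition norm2 (x : vec d) : R := dot x x.
Definition norm (x : vec d) : R := sqrt (norm2 x).

Definition is_gradient (f : vec d -> R) (g : vec d -> vec d) : Prop :=
  forall x eps, 0 < eps -> exists delta, 0 < delta /\
    forall y, norm (vsub y x) < delta ->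
      Rabs (f y - f x - dot (g x) (vsub y x)) <= eps * norm (vsub y x).

(* Extended-valued h : R^d -> R u {+oo} is represented by its (effective)
   domain D and its values h on D; outside D, h = +oo. *)
Definition ext_proper (D : vec d -> Prop) : Prop := exists x, D x.

Definition ext_convex (D : vec d -> Prop) (h : vec d -> R) : Prop :=
  forall x y lam, D x -> D y -> 0 <= lam <= 1 ->
    D (vadd (vscal lam x) (vscal (1 - lam) y)) /\
    h (vadd (vscal lam x) (vscal (1 - lam) y)) <= lam * h x + (1 - lam) * h y.

Definition vclosed_set (D : vec d -> Prop) : Prop :=
  forall x, (forall eps, 0 < eps -> exists y, D y /\ norm (vsub y x) < eps) -> D x.

(* Lower semicontinuity of the extended-valued function (given a closed domain,
   lsc at points outside D is automatic; at points of D it reads as follows). *)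
Definition ext_lsc (D : vec d -> Prop) (h : vec d -> R) : Prop :=
  forall x, D x -> forall eps, 0 < eps -> exists delta, 0 < delta /\
    forall y, D y -> norm (vsub y x) < delta -> h x - eps < h y.

Definition is_prox (D : vec d -> Prop) (h : vec d -> R) (eta : R)
    (px : vec d -> vec d) : Prop :=
  forall x, D (px x) /\
    forall y, D y ->
      h (px x) + norm2 (vsub (px x) x) / (2 * eta) <= h y + norm2 (vsub y x) / (2 * eta).
End Vec.

Section Problem.
Variables (n d : nat) (f : 'I_n -> vec d -> R) (gf : 'I_n -> vec d -> vec d).

Definition favg (x : vec d) : R := / INR n * \big[Rplus/R0]_(i : 'I_n) f i x.
Definition gavg (x : vec d) : vec d := vscal (/ INR n) (vsum (fun i : 'I_n => gf i x)).

Definition grad_map (px : vec d -> vec d) (eta : R) (x : vec d) : vec d :=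
  vscal (/ eta) (vsub x (px (vsub x (vscal eta (gavg x))))).

(* One draw (I_t, J_t): two multisets of b indices, i.e. b-tuples of [n]. *)
Definition draw (b : nat) := ({ffun 'I_b -> 'I_n} * {ffun 'I_b -> 'I_n})%type.

Fixpoint saga_state (b : nat) (px : vec d -> vec d) (eta : R) (x0 : vec d)
    (w : nat -> option (draw b)) (t : nat) : vec d * ('I_n -> vec d) :=
  match t with
  | O => (x0, fun _ => x0)
  | S t' =>
    let (x, al) := saga_state px eta x0 w t' in
    match w t' with
    | None => (x, al)
    | Some (II, JJ) =>
      let g := vscal (/ INR n) (vsum (fun i : 'I_n => gf i (al i))) in
      let v := vadd (vscal (/ INR b)
                  (vsum (fun k : 'I_b => vsub (gf (II k) x) (gf (II k) (al (II k)))))) g in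
      (px (vsub x (vscal eta v)),
       fun j => if [exists k, JJ k == j] then x else al j)
    end
  end.

Definition sample_space (b T : nat) := {ffun 'I_T -> draw b}.

Definition draws_of (b T : nat) (om : sample_space b T) (t : nat) : option (draw b) :=
  match (insub t : option 'I_T) with Some k => Some (om k) | None => None end.

(* E || G_eta(x_a) ||^2, with a uniform on {0,..,T-1} independent of the draws. *)
Definition expected_sq_grad_map (b T : nat) (px : vec d -> vec d) (eta : R)
    (x0 : vec d) : R :=
  / (INR #|{: sample_space b T}| * INR T) *
  \big[Rplus/R0]_(om : sample_space b T) \big[Rplus/R0]_(a < T)
     norm2 (grad_map px eta (fst (saga_state px eta x0 (draws_of om) a))).
End Problem.

(* Main.v *)
Require Import Defs.
From Stdlib Require Import Reals Lra Lia Psatz FunctionalExtensionality.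
From HB Require Import structures.
From mathcomp Require Import all_boot.
Open Scope R_scope.
Set Implicit Arguments. Unset Strict Implicit.


HB.instance Definition _ := Monoid.isComLaw.Build R R0 Rplus (fun a b c => esym (Rplus_assoc a b c)) Rplus_comm Rplus_0_l.

Section S.
Variable I : finType.
Lemma sumD (F G : I -> R) : \big[Rplus/R0]_i (F i + G i) = \big[Rplus/R0]_i F i + \big[Rplus/R0]_i G i.
Proof. by rewrite big_split. Qed.
Lemma sumZ (c : R) (F : I -> R) : \big[Rplus/R0]_i (c * F i) = c * \big[Rplus/R0]_i F i.
Proof. elim/big_rec2: _ => [|i y1 y2 _ ->]; lra. Qed.
Lemma sum_le (F G : I -> R) : (forall i, F i <= G i) -> \big[Rplus/R0]_i F i <= \big[Rplus/R0]_i G i.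
Proof. move=> H; elim/big_rec2: _ => [|i y1 y2 _ Hy]; [lra| have := H i; lra]. Qed.
Lemma sum_const (c : R) : \big[Rplus/R0]_(i : I) c = INR #|I| * c.
Proof. rewrite big_const; elim: #|I| => [|k IH]; [simpl; lra|]. rewrite S_INR /= IH; lra. Qed.
End S.

Section S2.
Variable I : finType.
Lemma sumB (F G : I -> R) : \big[Rplus/R0]_i (F i - G i) = \big[Rplus/R0]_i F i - \big[Rplus/R0]_i G i.
Proof. elim/big_rec3: _ => [|i y1 y2 y3 _ ->]; lra. Qed.
Lemma sumZr (c : R) (F : I -> R) : \big[Rplus/R0]_i (F i * c) = \big[Rplus/R0]_i F i * c.
Proof. elim/big_rec2: _ => [|i y1 y2 _ ->]; lra. Qed.
Lemma sum_ge0 (F : I -> R) : (forall i, 0 <= F i) -> 0 <= \big[Rplus/R0]_i F i.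
Proof. move=> H; elim/big_rec: _ => [|i y _ Hy]; [lra| have := H i; lra]. Qed.
Lemma sum_ext (F G : I -> R) : (forall i, F i = G i) -> \big[Rplus/R0]_i F i = \big[Rplus/R0]_i G i.
Proof. by move=> H; apply: eq_bigr => i _. Qed.
End S2.

Ltac tosum := rewrite /norm2 /dot /vsub /vadd /vscal /Rdiv;
  do 6 (rewrite -?sumZ -?sumZr -?sumB -?sumD);
  apply: sum_ext => ?.

Section V. Variable d : nat.
Implicit Types x y z : vec d.
Lemma norm2_ge0 x : 0 <= norm2 x.
Proof. apply: sum_ge0 => i; nra. Qed.
Lemma norm_sq x : norm x ^ 2 = norm2 x.
Proof. rewrite /norm /= Rmult_1_r sqrt_sqrt //; exact: norm2_ge0. Qed.
Lemma norm_ge0 x : 0 <= norm x.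
Proof. exact: sqrt_pos. Qed.
Lemma norm2_scal a x : norm2 (vscal a x) = a ^ 2 * norm2 x.
Proof. rewrite /norm2 /dot /vscal -sumZ; apply: sum_ext => i; ring. Qed.
Lemma norm_scal a x : norm (vscal a x) = Rabs a * norm x.
Proof. rewrite /norm norm2_scal sqrt_mult_alt; last by nra.
  by rewrite /= Rmult_1_r sqrt_Rsqr_abs. Qed.
Lemma test x y (e : R) : e <> 0 -> norm2 (vsub x y) / (2 * e) = norm2 x / (2*e) - 2 * dot x y / (2 * e) + norm2 y / (2 * e).
Proof. move=> He. tosum. field. done. Qed.
End V.

Ltac fixsort := repeat match goal with |- context [Finite.sort (fintype_ordinal__canonical__fintype_Finite ?m)] =>
  change (Finite.sort (fintype_ordinal__canonical__fintype_Finite m)) with (ordinal m) end.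


Section FF. Variables (X : finType) (m : nat).
Definition fext (g : {ffun 'I_m -> X}) (x : X) : {ffun 'I_m.+1 -> X} :=
  [ffun k => if unlift ord_max k is Some k' then g k' else x].
Definition fsplit (F : {ffun 'I_m.+1 -> X}) : {ffun 'I_m -> X} * X :=
  ([ffun k => F (lift ord_max k)], F ord_max).
Lemma sum_ffunS (G : {ffun 'I_m.+1 -> X} -> R) :
  \big[Rplus/R0]_F G F = \big[Rplus/R0]_g \big[Rplus/R0]_x G (fext g x).
Proof.
rewrite pair_big /= (reindex (fun p => fext p.1 p.2)) //.
exists fsplit.
- move=> [g x] _ /=; congr pair.
  + by apply/ffunP => k; rewrite !ffunE liftK.
  + by rewrite ffunE unlift_none.
- move=> F _; apply/ffunP => k; rewrite /fsplit /fext /= ffunE.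
  case: unliftP => [k' ->|->]; by rewrite ?ffunE.
Qed.
End FF.


Section D. Variable d : nat.
Implicit Types x y z : vec d.
Lemma dot_scal_r x y a : dot x (vscal a y) = a * dot x y.
Proof. rewrite /dot /vscal -sumZ; apply: sum_ext => i; ring. Qed.
Lemma dot_sub_l x y z : dot (vsub x y) z = dot x z - dot y z.
Proof. rewrite /dot /vsub -sumB; apply: sum_ext => i; ring. Qed.

Lemma dphi (f : vec d -> R) g : is_gradient f g -> forall x dd t,
  derivable_pt_lim (fun s => f (vadd x (vscal s dd))) t (dot (g (vadd x (vscal t dd))) dd).
Proof.
move=> Hg x dd t eps Heps.
set z := vadd x (vscal t dd).
set M := norm dd + 1.
have HM : 0 < M by have := norm_ge0 dd; rewrite /M; lra.
have Hnd : 0 <= norm dd by apply: norm_ge0.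
have [del [Hdel H]] := Hg z (eps / (2*M)) ltac:(apply: Rdiv_lt_0_compat; lra).
have Hpos : 0 < del / M by apply: Rdiv_lt_0_compat.
exists (mkposreal _ Hpos) => hh Hh0 /= Hhd.
have Heq: vsub (vadd x (vscal (t+hh) dd)) z = vscal hh dd.
  apply: functional_extensionality => i; rewrite /z /vsub /vadd /vscal /=; ring.
have Hha : 0 < Rabs hh by apply: Rabs_pos_lt.
have Hlt : Rabs hh * M < del.
  by have := Rmult_lt_compat_r M _ _ HM Hhd; rewrite /Rdiv Rmult_assoc Rinv_l; lra.
have := H (vadd x (vscal (t+hh) dd)).
rewrite Heq norm_scal dot_scal_r => H1.
have Hle : Rabs hh * norm dd <= Rabs hh * M by apply: Rmult_le_compat_l; [lra| rewrite /M; lra].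
have {}H1 := H1 ltac:(lra).
set a := f (vadd x (vscal (t + hh) dd)) - f z in H1 *.
have -> : a / hh - dot (g z) dd = (a - hh * dot (g z) dd) * / hh by field.
rewrite Rabs_mult Rabs_inv.
have Hb : Rabs (a - hh * dot (g z) dd) * / Rabs hh <= eps / (2 * M) * norm dd.
  apply: (Rmult_le_reg_r (Rabs hh)) => //.
  rewrite Rmult_assoc Rinv_l; nra.
have : eps / (2 * M) * norm dd < eps.
  rewrite /Rdiv. have : norm dd < M by rewrite /M; lra.
  have : 0 < / (2 * M) by apply: Rinv_0_lt_compat; lra.
  move=> Hi Hm. have -> : eps * / (2 * M) * norm dd = eps * (norm dd * / (2 * M)) by ring.
  have : norm dd * / (2*M) < 1. 
    apply: (Rmult_lt_reg_r (2*M)); first lra. rewrite Rmult_assoc Rinv_l; lra.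
  nra.
lra.
Qed.
End D.

Section Desc. Variable d : nat.
Implicit Types x y z : vec d.
Lemma young x y lam : 0 < lam -> 2 * dot x y <= norm2 x / lam + lam * norm2 y.
Proof.
move=> Hl. have H := norm2_ge0 (vsub x (vscal lam y)).
have E : norm2 (vsub x (vscal lam y)) = norm2 x - 2 * lam * dot x y + lam ^ 2 * norm2 y by tosum; ring.
rewrite E in H.
apply: (Rmult_le_reg_l lam) => //.
have -> : lam * (norm2 x / lam + lam * norm2 y) = norm2 x + lam ^ 2 * norm2 y by field; lra.
nra.
Qed.

Lemma dq A K t : derivable_pt_lim (fun s => A * s + K * (s * s)) t (A + K * (2 * t)).
Proof.
have H := derivable_pt_lim_plus (mult_real_fct A id) (mult_real_fct K (id * id)%F) t _ _
  (derivable_pt_lim_scal id A t _ (derivable_pt_lim_id t))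
  (derivable_pt_lim_scal _ K t _ (derivable_pt_lim_mult id id t _ _ (derivable_pt_lim_id t) (derivable_pt_lim_id t))).
have E : A * 1 + K * (1 * id t + id t * 1) = A + K * (2 * t) by rewrite /id; ring.
rewrite E in H. exact: H.
Qed.

Lemma descent (f : vec d -> R) g L : is_gradient f g -> 0 < L ->
  (forall x y, norm (vsub (g x) (g y)) <= L * norm (vsub x y)) ->
  forall x y, f y <= f x + dot (g x) (vsub y x) + L / 2 * norm2 (vsub y x).
Proof.
move=> Hg HL Hs x y.
set dd := vsub y x.
set A := dot (g x) dd. set K := L / 2 * norm2 dd.
pose psi := fun s => f (vadd x (vscal s dd)) - (A * s + K * (s * s)).
pose psi' := fun s => dot (g (vadd x (vscal s dd))) dd - (A + K * (2 * s)).
have Hd : forall c, 0 <= c <= 1 -> derivable_pt_lim psi c (psi' c).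
  move=> c _; apply: (derivable_pt_lim_minus (fun s => f (vadd x (vscal s dd))) (fun s => A * s + K * (s * s))).
  - exact: dphi.
  - exact: dq.
have [c [Hc1 Hc2]] := MVT_cor2 psi psi' 0 1 Rlt_0_1 Hd.
have Hneg : psi' c <= 0.
  rewrite /psi' /A /K.
  set u := vsub (g (vadd x (vscal c dd))) (g x).
  have Hu : norm2 u <= L ^ 2 * (c ^ 2 * norm2 dd).
    have Hn := Hs (vadd x (vscal c dd)) x.
    have E : vsub (vadd x (vscal c dd)) x = vscal c dd
      by apply: functional_extensionality => i; rewrite /vsub /vadd /vscal /=; ring.
    rewrite E norm_scal Rabs_pos_eq in Hn; last lra.
    rewrite -norm_sq -norm_sq.
    rewrite -/u in Hn. have := norm_ge0 u; have := norm_ge0 dd. move=> H1 H2. have H3 : 0 <= L * (c * norm dd) by nra. have := pow_incr _ _ 2 (conj H2 Hn). lra.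
  have Hy := @young u dd (L * c) ltac:(nra).
  have E : dot u dd = dot (g (vadd x (vscal c dd))) dd - dot (g x) dd by rewrite /u dot_sub_l.
  have : norm2 u / (L * c) <= L * c * norm2 dd.
    apply: (Rmult_le_reg_l (L * c)); first nra.
    have -> : L * c * (norm2 u / (L * c)) = norm2 u by field; nra.
    nra.
  have := norm2_ge0 dd. nra.
have E0 : vadd x (vscal 0 dd) = x by apply: functional_extensionality => i; rewrite /vadd /vscal /=; ring.
have E1 : vadd x (vscal 1 dd) = y by apply: functional_extensionality => i; rewrite /vadd /vscal /dd /vsub /=; ring.
move: Hc1; rewrite /psi E0 E1 /K => Hc1.
nra.
Qed.
End Desc.

Section Prox. Variable d : nat.
Implicit Types x y z u : vec d.
Lemma prox3 (D : vec d -> Prop) h eta px : ext_convex D h -> is_prox D h eta px -> 0 < eta ->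
  forall u z, D z ->
  h (px u) + norm2 (vsub (px u) u) / (2 * eta) + norm2 (vsub z (px u)) / (2 * eta)
  <= h z + norm2 (vsub z u) / (2 * eta).
Proof.
move=> Hc Hp He u z Hz.
have [HDp Hmin] := Hp u.
set p := px u in HDp Hmin *.
set Dt := dot (vsub p u) (vsub z p).
set Nz := norm2 (vsub z p).
have Hnz : 0 <= Nz by apply: norm2_ge0.
have Hl : forall lam, 0 < lam <= 1 -> h p <= h z + Dt / eta + lam * (Nz / (2 * eta)).
  move=> lam Hlam.
  have [HDy Hhy] := Hc z p lam Hz HDp ltac:(lra).
  have Hm := Hmin _ HDy.
  have E : norm2 (vsub (vadd (vscal lam z) (vscal (1 - lam) p)) u) =
    norm2 (vsub p u) + 2 * lam * Dt + lam ^ 2 * Nz by rewrite /Dt /Nz; tosum; ring.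
  rewrite E in Hm.
  have H2 : lam * h p <= lam * (h z + Dt / eta + lam * (Nz / (2 * eta))).
    have -> : lam * (h z + Dt / eta + lam * (Nz / (2 * eta))) =
      lam * h z + (2 * lam * Dt + lam ^ 2 * Nz) / (2 * eta) by field; lra.
    have E3 : (norm2 (vsub p u) + 2 * lam * Dt + lam ^ 2 * Nz) / (2 * eta) =
      norm2 (vsub p u) / (2 * eta) + (2 * lam * Dt + lam ^ 2 * Nz) / (2 * eta) by field; lra.
    rewrite E3 in Hm. lra.
  apply: (Rmult_le_reg_l lam); lra.
have Hmain : h p <= h z + Dt / eta.
  apply: Rnot_lt_le => Hgt.
  set gap := h p - (h z + Dt / eta).
  set K := Nz / (2 * eta).
  have HK : 0 <= K by rewrite /K; apply: Rmult_le_pos; [lra| apply: Rlt_le; apply: Rinv_0_lt_compat; lra].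
  have Hg : 0 < gap by rewrite /gap; lra.
  set lam := gap / (K + gap + 1).
  have Hlam0 : 0 < lam by rewrite /lam; apply: Rdiv_lt_0_compat; lra.
  have Hlam1 : lam <= 1.
    rewrite /lam; apply: (Rmult_le_reg_r (K + gap + 1)); first lra.
    rewrite /Rdiv Rmult_assoc Rinv_l; lra.
  have HlK : lam * K < gap.
    rewrite /lam /Rdiv.
    have -> : gap * / (K + gap + 1) * K = gap * (K / (K + gap + 1)) by rewrite /Rdiv; ring.
    have : K / (K + gap + 1) < 1.
      apply: (Rmult_lt_reg_r (K + gap + 1)); first lra.
      rewrite /Rdiv Rmult_assoc Rinv_l; lra.
    nra.
  have := Hl lam (conj Hlam0 Hlam1). rewrite -/K /gap in HlK *. lra.
have E2 : norm2 (vsub z u) / (2 * eta) - norm2 (vsub p u) / (2 * eta) - Nz / (2 * eta) = Dt / eta.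
  rewrite /Nz /Dt; tosum; field; lra.
lra.
Qed.
End Prox.

Section Step. Variable d : nat.
Implicit Types x y z u v : vec d.
Lemma stepF (D : vec d -> Prop) h eta px fA gA L :
  ext_convex D h -> is_prox D h eta px -> 0 < eta ->
  (forall x y, fA y <= fA x + dot (gA x) (vsub y x) + L / 2 * norm2 (vsub y x)) ->
  forall x v, D x ->
  let y := px (vsub x (vscal eta v)) in
  fA y + h y <= fA x + h x + eta / 2 * norm2 (vsub (gA x) v)
     + (L / 2 - 1 / (2 * eta)) * norm2 (vsub y x)
     - eta / 2 * norm2 (vscal (/ eta) (vsub x (px (vsub x (vscal eta (gA x)))))).
Proof.
move=> Hc Hp He Hd x v Hx y.
set u := vsub x (vscal eta v).
set g := gA x.
set ub := vsub x (vscal eta g).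
set xb := px ub.
have HDxb : D xb by case: (Hp ub).
have HB := prox3 Hc Hp He ub Hx.
have HC := prox3 Hc Hp He u HDxb.
have HF := Hd x y.
rewrite -/xb in HB. rewrite -/y in HC.
have HY := norm2_ge0 (vsub (vsub y xb) (vscal eta (vsub g v))).
rewrite norm2_scal.
have Id : norm2 (vsub xb u) / (2 * eta) - norm2 (vsub y u) / (2 * eta) - norm2 (vsub xb y) / (2 * eta) + norm2 (vsub x ub) / (2 * eta)
   - norm2 (vsub xb ub) / (2 * eta) - norm2 (vsub x xb) / (2 * eta) + dot g (vsub y x)
   = eta / 2 * norm2 (vsub g v) - norm2 (vsub y x) / (2 * eta)
     - (/ eta) ^ 2 * norm2 (vsub x xb) * eta / 2
     - norm2 (vsub (vsub y xb) (vscal eta (vsub g v))) / (2 * eta).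
  rewrite /u /ub; tosum; field; lra.
have : 0 <= norm2 (vsub (vsub y xb) (vscal eta (vsub g v))) / (2 * eta).
  apply: Rmult_le_pos => //; apply: Rlt_le; apply: Rinv_0_lt_compat; lra.
have E1 : (L / 2 - 1 / (2 * eta)) * norm2 (vsub y x) = L / 2 * norm2 (vsub y x) - norm2 (vsub y x) / (2 * eta) by field; lra.
rewrite E1.
have E2 : (/ eta) ^ 2 * norm2 (vsub x xb) * eta / 2 = eta / 2 * ((/ eta) ^ 2 * norm2 (vsub x xb))  by field; lra.
rewrite E2 in Id.
rewrite -/g in HF. lra.
Qed.
End Step.


Lemma fext_widen (X : finType) m (g : {ffun 'I_m -> X}) x (k : 'I_m) :
  fext g x (widen_ord (leqnSn m) k) = g k.
Proof.
have -> : widen_ord (leqnSn m) k = lift ord_max k by apply: val_inj; rewrite /= /bump leqNgt ltn_ord.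
by rewrite /fext ffunE liftK.
Qed.
Lemma fext_max (X : finType) m (g : {ffun 'I_m -> X}) x : fext g x ord_max = x.
Proof. by rewrite /fext ffunE unlift_none. Qed.

Lemma iterR k (C : R) : iter k (Rplus C) R0 = INR k * C.
Proof. elim: k => [|k IH]; [simpl; lra| rewrite S_INR /= IH; lra]. Qed.

Lemma sum_if (I : finType) (a : pred I) (A B : R) :
  \big[Rplus/R0]_i (if a i then A else B) = INR #|a| * A + INR #|[predC a]| * B.
Proof.
rewrite (bigID a) /=.
rewrite (eq_bigr (fun _ => A)); last by move=> i ->.
rewrite [X in _ + X](eq_bigr (fun _ => B)); last by move=> i /negbTE ->.
have E1 : \big[Rplus/R0]_(i | a i) A = \big[Rplus/R0]_(i in a) A by apply: eq_bigl.
have E2 : \big[Rplus/R0]_(i | ~~ a i) B = \big[Rplus/R0]_(i in [predC a]) B by apply: eq_bigl => i; rewrite !inE.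
by rewrite E1 E2 !big_const !iterR.
Qed.

Lemma sum_if2 (I : finType) (a : pred I) (A B : R) :
  \big[Rplus/R0]_i (if a i then A else B) = INR #|I| * A + INR #|[predC a]| * (B - A).
Proof.
rewrite sum_if. have := cardC a. move=> H. rewrite -H plus_INR. ring.
Qed.

Lemma INR_expn m k : INR (m ^ k)%N = INR m ^ k.
Proof. elim: k => [|k IH] //=. by rewrite expnS mult_INR IH. Qed.

Lemma var_scalar (n : nat) (w : 'I_n -> R) : \big[Rplus/R0]_i w i = 0 ->
  forall b, INR n * \big[Rplus/R0]_(I : {ffun 'I_b -> 'I_n}) (\big[Rplus/R0]_(k < b) w (I k)) ^ 2
   = INR b * INR n ^ b * \big[Rplus/R0]_i w i ^ 2.
Proof.
move=> Hw; elim=> [|b IH].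
  rewrite [X in INR n * X](eq_bigr (fun _ => 0)); last by move=> I _; rewrite big_ord0 /=; ring.
  rewrite sum_const /=; ring.
rewrite sum_ffunS.
have E : forall g : {ffun 'I_b -> 'I_n},
  \big[Rplus/R0]_j (\big[Rplus/R0]_(k < b.+1) w (fext g j k)) ^ 2 =
  INR n * (\big[Rplus/R0]_(k < b) w (g k)) ^ 2 + \big[Rplus/R0]_i w i ^ 2.
  move=> g. set Sg := \big[Rplus/R0]_(k < b) w (g k).
  rewrite (eq_bigr (fun j => Sg ^ 2 + 2 * Sg * w j + w j ^ 2)); last first.
    move=> j _; rewrite big_ord_recr /= fext_max.
    rewrite (eq_bigr (fun k => w (g k))); last by move=> k _; rewrite fext_widen.
    rewrite -/Sg; ring.
  rewrite !sumD sumZ Hw sum_const card_ord; ring.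
rewrite (eq_bigr _ (fun g _ => E g)) sumD sumZ sum_const card_ffun !card_ord INR_expn.
have -> : INR n * (INR n * \big[Rplus/R0]_(i : {ffun 'I_b -> 'I_n}) (\big[Rplus/R0]_(k < b) w (i k)) ^ 2 +
   INR n ^ b * \big[Rplus/R0]_i w i ^ 2) =
   INR n * (INR n * \big[Rplus/R0]_(i : {ffun 'I_b -> 'I_n}) (\big[Rplus/R0]_(k < b) w (i k)) ^ 2) +
   INR n * INR n ^ b * \big[Rplus/R0]_i w i ^ 2 by ring.
rewrite IH S_INR /=; ring.
Qed.

Lemma sqsum (I : finType) (F : I -> R) : \big[Rplus/R0]_i (F i * F i) = \big[Rplus/R0]_i (F i ^ 2).
Proof. apply: sum_ext => i; ring. Qed.

Lemma var_vec (n d b : nat) (Y : 'I_n -> vec d) : (forall j, \big[Rplus/R0]_i Y i j = 0) ->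
  INR n * \big[Rplus/R0]_(I : {ffun 'I_b -> 'I_n}) norm2 (vsum (fun k : 'I_b => Y (I k)))
  = INR b * INR n ^ b * \big[Rplus/R0]_i norm2 (Y i).
Proof.
move=> HY.
rewrite /norm2 /dot /vsum.
rewrite [X in INR n * X]exchange_big [X in _ = _ * X]exchange_big /=.
rewrite -sumZ -sumZ; apply: sum_ext => j.
have := var_scalar (HY j) b.
have E1 : forall r : R, r ^ 2 = r * r by move=> r; ring.
by rewrite !sqsum.
Qed.

Lemma mean_le (n : nat) (z : 'I_n -> R) : (0 < n)%nat ->
  \big[Rplus/R0]_i (z i - / INR n * \big[Rplus/R0]_k z k) ^ 2 <= \big[Rplus/R0]_i z i ^ 2.
Proof.
move=> Hn.
have Hn' : 0 < INR n by apply: lt_0_INR; apply/ltP.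
set mu := / INR n * \big[Rplus/R0]_k z k.
have Hs : \big[Rplus/R0]_k z k = INR n * mu by rewrite /mu; field; lra.
rewrite (eq_bigr (fun i => z i ^ 2 - 2 * mu * z i + mu ^ 2)); last by move=> i _; ring.
rewrite sumD sumB sumZ sum_const card_ord Hs.
have : 0 <= INR n * mu ^ 2 by nra.
lra.
Qed.

Lemma pow_bound (a : R) (b : nat) : 0 <= a <= 1 -> INR b * a <= 1 ->
  (1 - a) ^ b <= 1 - INR b * a / 2.
Proof.
move=> Ha Hba.
have H : forall k, INR k * a <= 1 -> (1 - a) ^ k * (1 + INR k * a) <= 1.
  elim=> [|k IH] Hk; first by simpl; lra.
  rewrite S_INR in Hk *.
  have Hk' : INR k * a <= 1 by have := pos_INR k; nra.
  have := IH Hk'.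
  have Hp : 0 <= (1 - a) ^ k by apply: pow_le; lra.
  have Hpos := pos_INR k.
  rewrite /=.
  have : (1 - a) * (1 + (INR k + 1) * a) <= 1 + INR k * a by nra.
  nra.
have := H b Hba.
have Hp : 0 <= (1 - a) ^ b by apply: pow_le; lra.
have := pos_INR b.
move=> H1 H2.
set P := (1 - a) ^ b in Hp H2 *. set y := INR b * a in Hba H2 *.
have Hy : 0 <= y by rewrite /y; nra.
have H3 : (P - (1 - y / 2)) * (1 + y) <= 0 by nra.
apply: Rnot_lt_le => H4.
have : 0 < (P - (1 - y / 2)) * (1 + y) by apply: Rmult_lt_0_compat; lra.
lra.
Qed.

Lemma cnt_miss (n b : nat) (i : 'I_n) :
  #|[predC (fun J : {ffun 'I_b -> 'I_n} => [exists k, J k == i])]| = (n.-1 ^ b)%N.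
Proof.
have E := @card_ffun_on 'I_b 'I_n (predC1 i).
rewrite cardC1 !card_ord in E. rewrite -E.
apply: eq_card => J; rewrite !inE negb_exists.
apply/forallP/ffun_onP => H k; have := H k; by rewrite !inE.
Qed.

Lemma avgJ (n b : nat) (i : 'I_n) (A B : R) : (1 <= n)%N -> (b <= n)%N ->
  exists r, 0 <= r <= 1 - INR b / (2 * INR n) /\
  / INR n ^ b * \big[Rplus/R0]_(J : {ffun 'I_b -> 'I_n}) (if [exists k, J k == i] then A else B)
  = (1 - r) * A + r * B.
Proof.
move=> Hn Hbn.
have Hn' : 1 <= INR n by apply: (le_INR 1); apply/leP.
have Hbn' : INR b <= INR n by apply: le_INR; apply/leP.
rewrite (sum_if2 (fun J : {ffun 'I_b -> 'I_n} => [exists k, J k == i])).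
rewrite cnt_miss card_ffun !card_ord !INR_expn.
have Hnm : INR n.-1 = INR n - 1 by rewrite -(prednK Hn) S_INR /=; ring.
have Hpn : 0 < INR n ^ b by apply: pow_lt; lra.
have Hi : 0 < / INR n <= 1.
  split; first by apply: Rinv_0_lt_compat; lra.
  by rewrite -Rinv_1; apply: Rinv_le_contravar; lra.
exists ((1 - / INR n) ^ b); split.
  split; first by apply: pow_le; lra.
  have Hb1 : INR b * / INR n <= 1.
    apply: (Rmult_le_reg_r (INR n)); first lra.
    rewrite Rmult_assoc Rinv_l; lra.
  have := pow_bound (conj (Rlt_le _ _ (proj1 Hi)) (proj2 Hi)) Hb1.
  have -> : INR b / (2 * INR n) = INR b * / INR n / 2 by field; lra.
  done.
have -> : 1 - / INR n = INR n.-1 * / INR n by rewrite Hnm; field; lra.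
rewrite Rpow_mult_distr pow_inv.
field; lra.
Qed.


Section Ex.
Variables (n b : nat).
Hypothesis Hn : (1 <= n)%N.
Notation Dr := (draw n b).
Definition NDr := \big[Rplus/R0]_(dl : Dr) 1.
Definition avgD (G : Dr -> R) := / NDr * \big[Rplus/R0]_(dl : Dr) G dl.
Definition upd (w : nat -> option Dr) (t : nat) (dl : Dr) : nat -> option Dr :=
  fun s => if s == t then Some dl else w s.
Fixpoint Ex (t : nat) (G : (nat -> option Dr) -> R) : R :=
  match t with
  | O => G (fun _ => None)
  | S t' => Ex t' (fun w => avgD (fun dl => G (upd w t' dl)))
  end.

Lemma cardD_pos : 0 < INR #|{: Dr}|.
Proof.
apply: lt_0_INR; apply/ltP.
rewrite card_prod card_ffun card_ord muln_gt0 expn_gt0 /= card_ord.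
by case: n Hn.
Qed.

Lemma NDr_pos : 0 < NDr.
Proof. rewrite /NDr sum_const Rmult_1_r; exact: cardD_pos. Qed.
Lemma avgD_const c : avgD (fun _ => c) = c.
Proof.
rewrite /avgD (eq_bigr (fun dl => c * 1)); last by move=> *; ring.
rewrite sumZ -/NDr; have := NDr_pos; move=> H; field; lra. Qed.
Lemma avgD_plus G H : avgD (fun dl => G dl + H dl) = avgD G + avgD H.
Proof. by rewrite /avgD sumD Rmult_plus_distr_l. Qed.
Lemma avgD_scal c G : avgD (fun dl => c * G dl) = c * avgD G.
Proof. rewrite /avgD sumZ -!Rmult_assoc (Rmult_comm c); done. Qed.
Lemma avgD_mono G H : (forall dl, G dl <= H dl) -> avgD G <= avgD H.
Proof.
move=> HGH; rewrite /avgD; apply: Rmult_le_compat_l.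
  by apply: Rlt_le; apply: Rinv_0_lt_compat; apply: NDr_pos.
exact: sum_le.
Qed.

Lemma Ex_ext t G H : (forall w, G w = H w) -> Ex t G = Ex t H.
Proof. by move=> E; have -> : G = H by apply: functional_extensionality. Qed.
Lemma Ex_const t c : Ex t (fun _ => c) = c.
Proof.
elim: t c => [|t IH] c //=.
by rewrite (Ex_ext _ (fun w => avgD_const c)) IH.
Qed.
Lemma Ex_plus t G H : Ex t (fun w => G w + H w) = Ex t G + Ex t H.
Proof.
elim: t G H => [|t IH] G H //=.
by rewrite -IH; apply: Ex_ext => w; rewrite avgD_plus.
Qed.
Lemma Ex_scal t c G : Ex t (fun w => c * G w) = c * Ex t G.
Proof.
elim: t G => [|t IH] G //=.
by rewrite -IH; apply: Ex_ext => w; rewrite avgD_scal.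
Qed.
Lemma Ex_mono t G H : (forall w, G w <= H w) -> Ex t G <= Ex t H.
Proof.
elim: t G H => [|t IH] G H HGH //=.
by apply: IH => w; apply: avgD_mono.
Qed.
Lemma Ex_inv t G : (forall w dl, G (upd w t dl) = G w) -> Ex t.+1 G = Ex t G.
Proof.
move=> HG /=. apply: Ex_ext => w.
rewrite (_ : (fun dl => G (upd w t dl)) = fun _ => G w); first exact: avgD_const.
by apply: functional_extensionality => dl.
Qed.
End Ex.

Section Saga.
Variables (n d b : nat) (gf : 'I_n -> vec d -> vec d) (px : vec d -> vec d) (eta : R) (x0 : vec d).
Hypothesis Hn : (1 <= n)%N.
Definition stepf (s : vec d * ('I_n -> vec d)) (o : option (draw n b)) : vec d * ('I_n -> vec d) :=
    let (x, al) := s in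
    match o with
    | None => (x, al)
    | Some (II, JJ) =>
      let g := vscal (/ INR n) (vsum (fun i : 'I_n => gf i (al i))) in
      let v := vadd (vscal (/ INR b)
                  (vsum (fun k : 'I_b => vsub (gf (II k) x) (gf (II k) (al (II k)))))) g in
      (px (vsub x (vscal eta v)),
       fun j => if [exists k, JJ k == j] then x else al j)
    end.
Notation st := (@saga_state n d gf b px eta x0).
Lemma saga_S w t : st w t.+1 = stepf (st w t) (w t).
Proof. by []. Qed.

Lemma st_upd w t dl a : (a <= t)%N -> st (upd w t dl) a = st w a.
Proof.
elim: a => [|a IH] Ha //.
rewrite !saga_S IH; last by apply: ltnW.
rewrite /upd. have -> : (a == t) = false by apply/eqP => E; rewrite E ltnn in Ha.
done.
Qed.

Lemma Ex_st a T (g : vec d * ('I_n -> vec d) -> R) : (a <= T)%N ->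
  Ex T (fun w => g (st w a)) = Ex a (fun w => g (st w a)).
Proof.
elim: T => [|T IH] Ha.
  by have -> : a = 0%N by apply/eqP; rewrite -leqn0.
case: (ltngtP a T.+1) => [Hlt|Hgt|<-] //.
- rewrite Ex_inv //; first by apply: IH.
  by move=> w dl; rewrite st_upd.
- by rewrite ltnNge Ha in Hgt.
Qed.

Lemma Ex_step t (g : vec d * ('I_n -> vec d) -> R) :
  Ex t.+1 (fun w => g (st w t.+1)) = Ex t (fun w => avgD (fun dl => g (stepf (st w t) (Some dl)))).
Proof.
rewrite /=; apply: Ex_ext => w; congr avgD; apply: functional_extensionality => dl.
change (g (st (upd w t dl) t.+1) = g (stepf (st w t) (Some dl))).
rewrite saga_S st_upd // /upd eqxx //.
Qed.
End Saga.

Section Sample.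
Variables (n b : nat).
Hypothesis Hn : (1 <= n)%N.

Lemma draws_fext T (g : sample_space n b T) (dl : draw n b) :
  draws_of (fext g dl : sample_space n b T.+1) = upd (draws_of g) T dl.
Proof.
apply: functional_extensionality => s; rewrite /draws_of /upd.
case: (ltngtP s T) => Hs.
- have Hs1 : (s < T.+1)%N by apply: ltnW.
  rewrite (insubT (fun x => x < T.+1)%N Hs1) (insubT (fun x => x < T)%N Hs).
  have -> : (Sub s Hs1 : 'I_T.+1) = widen_ord (leqnSn T) (Sub s Hs) by apply: val_inj.
  by rewrite fext_widen.
- have Hs1 : ~~ (s < T.+1)%N by rewrite -leqNgt.
  have Hs2 : ~~ (s < T)%N by rewrite -leqNgt ltnW.
  by rewrite (@insubF _ (fun x => x < T.+1)%N 'I_T.+1 s (negbTE Hs1)) (@insubF _ (fun x => x < T)%N 'I_T s (negbTE Hs2)).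
- subst s. have Hs1 : (T < T.+1)%N by [].
  rewrite (insubT (fun x => x < T.+1)%N Hs1) ?eqxx.
  have -> : (Sub T Hs1 : 'I_T.+1) = ord_max by apply: val_inj.
  by rewrite fext_max.
Qed.

Lemma SS_Ex T (G : (nat -> option (draw n b)) -> R) :
  \big[Rplus/R0]_(om : sample_space n b T) G (draws_of om) = NDr n b ^ T * Ex T G.
Proof.
elim: T G => [|T IH] G.
  have E : forall om : sample_space n b 0, draws_of om = fun _ => None.
    move=> om; apply: functional_extensionality => s; rewrite /draws_of.
    by case: insubP => // [[u Hu]].
  rewrite (eq_bigr (fun _ => G (fun _ => None))); last by move=> om _; rewrite E.
  rewrite sum_const /sample_space card_ffun card_ord expn0 /=; ring.
rewrite /sample_space sum_ffunS.
rewrite (eq_bigr (fun g => NDr n b * avgD (fun dl => G (upd (draws_of g) T dl)))); last first.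
  move=> g _; rewrite /avgD.
  have HN := NDr_pos b Hn.
  rewrite (eq_bigr (fun dl => G (upd (draws_of g) T dl))); last by move=> dl _; rewrite draws_fext.
  rewrite -Rmult_assoc Rinv_r; last lra.
  by rewrite Rmult_1_l.
rewrite (sumZ (NDr n b) (fun g : sample_space n b T => avgD (fun dl => G (upd (draws_of g) T dl)))).
rewrite (IH (fun w => avgD (fun dl => G (upd w T dl)))) /=; ring.
Qed.
End Sample.


Lemma scal_mix r p0 A W D2 : 0 < p0 <= 1/2 -> 0 <= r <= 1 - p0 -> 0 <= A -> 0 <= W ->
  D2 <= 2 * (1 - p0) / p0 * A + p0 / (2 * (1 - p0)) * W ->
  (1 - r) * A + r * (A + D2 + W) <= 2 / p0 * A + (1 - p0 / 2) * W.
Proof.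
move=> Hp Hr HA HW HD.
have H1 : r * D2 <= r * (2 * (1 - p0) / p0 * A) + r * (p0 / (2 * (1 - p0)) * W) by nra.
have H2 : r * (2 * (1 - p0) / p0 * A) <= (1 - p0) * (2 * (1 - p0) / p0 * A).
  apply: Rmult_le_compat_r; last lra.
  apply: Rmult_le_pos; last lra.
  apply: Rmult_le_pos; [lra| apply: Rlt_le; apply: Rinv_0_lt_compat; lra].
have H3 : r * (p0 / (2 * (1 - p0)) * W) <= (1 - p0) * (p0 / (2 * (1 - p0)) * W).
  apply: Rmult_le_compat_r; last lra.
  apply: Rmult_le_pos; last lra.
  apply: Rmult_le_pos; [lra| apply: Rlt_le; apply: Rinv_0_lt_compat; lra].
have E3 : (1 - p0) * (p0 / (2 * (1 - p0)) * W) = p0 / 2 * W by field; lra.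
have E2 : (1 - p0) * (2 * (1 - p0) / p0 * A) = 2 / p0 * A - (4 - 2 * p0) * A by field; lra.
have H4 : 0 <= (3 - 2 * p0) * A by nra.
nra.
Qed.

Lemma P2 n d b (x y : vec d) (al : 'I_n -> vec d) : (1 <= n)%N -> (1 <= b)%N -> (b <= n)%N ->
  / INR n ^ b * \big[Rplus/R0]_(J : {ffun 'I_b -> 'I_n})
     (/ INR n * \big[Rplus/R0]_i norm2 (vsub y (if [exists k, J k == i] then x else al i)))
  <= 2 / (INR b / (2 * INR n)) * norm2 (vsub y x)
     + (1 - INR b / (2 * INR n) / 2) * (/ INR n * \big[Rplus/R0]_i norm2 (vsub x (al i))).
Proof.
move=> Hn Hb Hbn.
set p0 := INR b / (2 * INR n).
have Hn' : 1 <= INR n by apply: (le_INR 1); apply/leP.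
have Hb' : 1 <= INR b by apply: (le_INR 1); apply/leP.
have Hbn' : INR b <= INR n by apply: le_INR; apply/leP.
have Hp0 : 0 < p0 <= 1/2.
  rewrite /p0; split; first by apply: Rdiv_lt_0_compat; lra.
  apply: (Rmult_le_reg_r (2 * INR n)); first lra.
  rewrite /Rdiv Rmult_assoc Rinv_l; lra.
have HN : 0 < INR n ^ b by apply: pow_lt; lra.
rewrite (eq_bigr (fun J : {ffun 'I_b -> 'I_n} => / INR n * \big[Rplus/R0]_i
   (if [exists k, J k == i] then norm2 (vsub y x) else norm2 (vsub y (al i))))); last first.
  by move=> J _; congr Rmult; apply: sum_ext => i; case: ifP.
rewrite sumZ exchange_big /=.
have Hi : forall i, / INR n ^ b * \big[Rplus/R0]_(J : {ffun 'I_b -> 'I_n})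
   (if [exists k, J k == i] then norm2 (vsub y x) else norm2 (vsub y (al i)))
   <= 2 / p0 * norm2 (vsub y x) + (1 - p0 / 2) * norm2 (vsub x (al i)).
  move=> i.
  have [r [Hr ->]] := avgJ i (norm2 (vsub y x)) (norm2 (vsub y (al i))) Hn Hbn.
  have E : norm2 (vsub y (al i)) = norm2 (vsub y x) + 2 * dot (vsub y x) (vsub x (al i)) + norm2 (vsub x (al i)).
    by tosum; ring.
  rewrite E; apply: scal_mix => //; try exact: norm2_ge0.
  set lam := p0 / (2 * (1 - p0)).
  have Hl : 0 < lam by rewrite /lam; apply: Rdiv_lt_0_compat; lra.
  have := young (vsub y x) (vsub x (al i)) Hl.
  have -> : norm2 (vsub y x) / lam = 2 * (1 - p0) / p0 * norm2 (vsub y x) by rewrite /lam; field; lra.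
  done.
have Hs := sum_le Hi.
rewrite sumD sum_const card_ord (sumZ (1 - p0 / 2)) in Hs.
have Hin : 0 < / INR n by apply: Rinv_0_lt_compat; lra.
have : / INR n ^ b * (/ INR n * \big[Rplus/R0]_i \big[Rplus/R0]_(J : {ffun 'I_b -> 'I_n})
   (if [exists k, J k == i] then norm2 (vsub y x) else norm2 (vsub y (al i))))
   = / INR n * \big[Rplus/R0]_i (/ INR n ^ b * \big[Rplus/R0]_(J : {ffun 'I_b -> 'I_n})
   (if [exists k, J k == i] then norm2 (vsub y x) else norm2 (vsub y (al i)))).
  by rewrite [in RHS]sumZ -!Rmult_assoc (Rmult_comm (/ INR n ^ b) (/ INR n)).
move=> ->.
apply: Rle_trans; first exact: (Rmult_le_compat_l _ _ _ (Rlt_le _ _ Hin) Hs).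
have Hnn : / INR n * (INR n * (2 / p0 * norm2 (vsub y x))) = 2 / p0 * norm2 (vsub y x) by field; lra.
rewrite Rmult_plus_distr_l Hnn.
have -> : / INR n * ((1 - p0 / 2) * \big[Rplus/R0]_i norm2 (vsub x (al i))) =
   (1 - p0 / 2) * (/ INR n * \big[Rplus/R0]_i norm2 (vsub x (al i))) by rewrite -!Rmult_assoc (Rmult_comm (/ INR n)).
exact: Rle_refl.
Qed.

Lemma P3 n d b (gf : 'I_n -> vec d -> vec d) L (x : vec d) (al : 'I_n -> vec d) :
  (1 <= n)%N -> (1 <= b)%N ->
  (forall i u w, norm2 (vsub (gf i u) (gf i w)) <= L ^ 2 * norm2 (vsub u w)) ->
  / INR n ^ b * \big[Rplus/R0]_(I : {ffun 'I_b -> 'I_n})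
    norm2 (vsub (gavg gf x)
      (vadd (vscal (/ INR b) (vsum (fun k : 'I_b => vsub (gf (I k) x) (gf (I k) (al (I k))))))
            (vscal (/ INR n) (vsum (fun i : 'I_n => gf i (al i))))))
  <= L ^ 2 / INR b * (/ INR n * \big[Rplus/R0]_i norm2 (vsub x (al i))).
Proof.
move=> Hn Hb Hs.
have Hn' : 1 <= INR n by apply: (le_INR 1); apply/leP.
have Hb' : 1 <= INR b by apply: (le_INR 1); apply/leP.
set Z := fun i => vsub (gf i x) (gf i (al i)).
set m := vscal (/ INR n) (vsum Z).
set Y := fun i => vsub (Z i) m.
have HY : forall j, \big[Rplus/R0]_i Y i j = 0.
  move=> j; rewrite /Y /vsub sumB sum_const card_ord /m /vscal /vsum; field; lra.
have Ev : forall I : {ffun 'I_b -> 'I_n}, vsub (gavg gf x)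
      (vadd (vscal (/ INR b) (vsum (fun k : 'I_b => vsub (gf (I k) x) (gf (I k) (al (I k))))))
            (vscal (/ INR n) (vsum (fun i : 'I_n => gf i (al i)))))
      = vscal (- / INR b) (vsum (fun k : 'I_b => Y (I k))).
  move=> I; apply: functional_extensionality => j.
  rewrite /gavg /Y /m /Z /vsub /vadd /vscal /vsum /=.
  rewrite [X in - / INR b * X]sumB sum_const card_ord sumB.
  rewrite [X in INR b * (/ INR n * X)]sumB. fixsort. field; lra.
rewrite (eq_bigr _ (fun I _ => congr1 (@norm2 d) (Ev I))).
rewrite (eq_bigr (fun I : {ffun 'I_b -> 'I_n} => (/ INR b) ^ 2 * norm2 (vsum (fun k : 'I_b => Y (I k))))); last first.
  by move=> I _; rewrite norm2_scal; congr Rmult; ring.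
rewrite sumZ.
have HV := var_vec b HY.
have HYZ : \big[Rplus/R0]_i norm2 (Y i) <= \big[Rplus/R0]_i norm2 (Z i).
  rewrite /norm2 /dot exchange_big [X in _ <= X]exchange_big /=.
  apply: sum_le => j.
  have := mean_le (fun i => Z i j) Hn.
  rewrite -!sqsum /Y /vsub /m /vscal /vsum /=.
  done.
have HZ : \big[Rplus/R0]_i norm2 (Z i) <= L ^ 2 * \big[Rplus/R0]_i norm2 (vsub x (al i)).
  rewrite -sumZ; apply: sum_le => i; exact: Hs.
have HN : 0 < INR n ^ b by apply: pow_lt; lra.
set SI := \big[Rplus/R0]_(I : {ffun 'I_b -> 'I_n}) norm2 (vsum (fun k : 'I_b => Y (I k))) in HV *.
have ESI : SI = INR b * INR n ^ b * \big[Rplus/R0]_i norm2 (Y i) / INR n by rewrite -HV; field; lra.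
rewrite ESI.
have -> : / INR n ^ b * ((/ INR b) ^ 2 * (INR b * INR n ^ b * \big[Rplus/R0]_i norm2 (Y i) / INR n))
   = / INR b * / INR n * \big[Rplus/R0]_i norm2 (Y i) by field; lra.
have -> : L ^ 2 / INR b * (/ INR n * \big[Rplus/R0]_i norm2 (vsub x (al i)))
   = / INR b * / INR n * (L ^ 2 * \big[Rplus/R0]_i norm2 (vsub x (al i))) by field; lra.
apply: Rmult_le_compat_l.
  apply: Rmult_le_pos; apply: Rlt_le; apply: Rinv_0_lt_compat; lra.
lra.
Qed.


Lemma dot_gavg n d (gf : 'I_n -> vec d -> vec d) x w :
  dot (gavg gf x) w = / INR n * \big[Rplus/R0]_i dot (gf i x) w.
Proof.
rewrite /gavg /dot /vscal /vsum.
rewrite (eq_bigr (fun k => / INR n * \big[Rplus/R0]_i (gf i x k * w k))); last first.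
  by move=> k _; rewrite sumZr Rmult_assoc.
by rewrite sumZ exchange_big.
Qed.

Lemma favg_descent n d (f : 'I_n -> vec d -> R) gf L : (1 <= n)%N -> 0 < L ->
  (forall i, is_gradient (f i) (gf i)) ->
  (forall i x y, norm (vsub (gf i x) (gf i y)) <= L * norm (vsub x y)) ->
  forall x y, favg f y <= favg f x + dot (gavg gf x) (vsub y x) + L / 2 * norm2 (vsub y x).
Proof.
move=> Hn HL Hg Hs x y.
have Hn' : 0 < / INR n by apply: Rinv_0_lt_compat; apply: lt_0_INR; apply/ltP.
rewrite /favg dot_gavg.
have H := sum_le (fun i => descent (Hg i) HL (Hs i) x y).
rewrite !sumD sum_const card_ord in H.
have E : / INR n * (INR n * (L / 2 * norm2 (vsub y x))) = L / 2 * norm2 (vsub y x).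
  by field; apply: not_0_INR => E0; rewrite E0 in Hn.
rewrite -E.
have := Rmult_le_compat_l _ _ _ (Rlt_le _ _ Hn') H.
rewrite !Rmult_plus_distr_l. fixsort. lra.
Qed.

Section Main.
Variables (n d b : nat) (f : 'I_n -> vec d -> R) (gf : 'I_n -> vec d -> vec d) (L : R)
  (D : vec d -> Prop) (h : vec d -> R) (rho : R) (px : vec d -> vec d).
Hypotheses (Hn : (1 <= n)%N) (Hb : (1 <= b)%N) (Hbn : (b <= n)%N) (HL : 0 < L)
  (Hgrad : forall i, is_gradient (f i) (gf i))
  (Hsmooth : forall i x y, norm (vsub (gf i x) (gf i y)) <= L * norm (vsub x y))
  (Hconv : ext_convex D h)
  (Hrho : 0 < rho < 1 / 2)
  (Hcond : 16 * INR n ^ 2 * rho ^ 2 / INR b ^ 3 + rho <= 1)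
  (Hprox : is_prox D h (rho / L) px).

Let eta := rho / L.
Let p0 := INR b / (2 * INR n).
Let cst := eta * L ^ 2 / (INR b * p0).
Definition Sf (s : vec d * ('I_n -> vec d)) := / INR n * \big[Rplus/R0]_i norm2 (vsub s.1 (s.2 i)).
Definition Phi (s : vec d * ('I_n -> vec d)) := favg f s.1 + h s.1 + cst * Sf s.

Lemma Hn' : 1 <= INR n. Proof. by apply: (le_INR 1); apply/leP. Qed.
Lemma Hb' : 1 <= INR b. Proof. by apply: (le_INR 1); apply/leP. Qed.
Lemma Hbn' : INR b <= INR n. Proof. by apply: le_INR; apply/leP. Qed.
Lemma Heta : 0 < eta. Proof. rewrite /eta; apply: Rdiv_lt_0_compat; lra. Qed.
Lemma Hp0 : 0 < p0. Proof. have := Hn'; have := Hb'; rewrite /p0 => *; apply: Rdiv_lt_0_compat; lra. Qed.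
Lemma Hcst : 0 <= cst.
Proof.
have := Heta; have := Hp0; have := Hb'; rewrite /cst => *.
apply: Rlt_le; apply: Rdiv_lt_0_compat; [|nra]. have : 0 < L ^ 2 by nra. nra.
Qed.

Lemma coef1 : cst * (1 - p0 / 2) + eta / 2 * (L ^ 2 / INR b) = cst.
Proof. have := Hp0; have := Hb'; have := Heta; rewrite /cst => *; field; lra. Qed.

Lemma coef2 : L / 2 - 1 / (2 * eta) + cst * (2 / p0) <= 0.
Proof.
have := Hn'; have := Hb'; rewrite /cst /p0 /eta => *.
have E : L / 2 - 1 / (2 * (rho / L)) + rho / L * L ^ 2 / (INR b * (INR b / (2 * INR n))) * (2 / (INR b / (2 * INR n)))
  = L / (2 * rho) * (rho - 1 + 16 * INR n ^ 2 * rho ^ 2 / INR b ^ 3).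
  field; repeat split; lra.
rewrite E.
have : rho - 1 + 16 * INR n ^ 2 * rho ^ 2 / INR b ^ 3 <= 0 by lra.
have : 0 < L / (2 * rho) by apply: Rdiv_lt_0_compat; lra.
nra.
Qed.

Lemma sum_pair (G : draw n b -> R) :
  \big[Rplus/R0]_(dl : draw n b) G dl =
  \big[Rplus/R0]_(I : {ffun 'I_b -> 'I_n}) \big[Rplus/R0]_(J : {ffun 'I_b -> 'I_n}) G (I, J).
Proof. by rewrite pair_bigA; apply: eq_bigr => [[I J]]. Qed.

Lemma sum_ffc (c : R) : \big[Rplus/R0]_(J : {ffun 'I_b -> 'I_n}) c = INR n ^ b * c.
Proof. by rewrite sum_const card_ffun !card_ord INR_expn. Qed.

Lemma avgD_split (G : draw n b -> R) : avgD G =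
  / INR n ^ b * \big[Rplus/R0]_(I : {ffun 'I_b -> 'I_n}) (/ INR n ^ b * \big[Rplus/R0]_(J : {ffun 'I_b -> 'I_n}) G (I, J)).
Proof.
have HN : 0 < INR n ^ b by apply: pow_lt; have := Hn'; lra.
rewrite /avgD /NDr !sum_pair sumZ.
rewrite [X in / X * _](eq_bigr (fun _ => INR n ^ b * 1)); last by move=> I _; rewrite sum_ffc.
rewrite sum_ffc Rmult_1_r Rinv_mult Rmult_assoc; reflexivity.
Qed.

Lemma Hs2 : forall i u w, norm2 (vsub (gf i u) (gf i w)) <= L ^ 2 * norm2 (vsub u w).
Proof.
move=> i u w. rewrite -!norm_sq.
have H := Hsmooth i u w. have := norm_ge0 (vsub (gf i u) (gf i w)).
have := norm_ge0 (vsub u w). move=> H1 H2.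
have := pow_incr _ _ 2 (conj H2 H). lra.
Qed.

Lemma onestep x al : D x ->
  avgD (fun dl : draw n b => Phi (stepf gf px eta (x, al) (Some dl))) + eta / 2 * norm2 (grad_map gf px eta x)
  <= Phi (x, al).
Proof.
move=> Hx.
set Gn := norm2 (grad_map gf px eta x).
set S := Sf (x, al).
pose v := fun I : {ffun 'I_b -> 'I_n} =>
  vadd (vscal (/ INR b) (vsum (fun k : 'I_b => vsub (gf (I k) x) (gf (I k) (al (I k))))))
       (vscal (/ INR n) (vsum (fun i : 'I_n => gf i (al i)))).
pose y := fun I => px (vsub x (vscal eta (v I))).
have HN : 0 < INR n ^ b by apply: pow_lt; have := Hn'; lra.
have Hdesc := favg_descent Hn HL Hgrad Hsmooth.
have HF : forall I, favg f (y I) + h (y I) <= favg f x + h x + eta / 2 * norm2 (vsub (gavg gf x) (v I))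
     + (L / 2 - 1 / (2 * eta)) * norm2 (vsub (y I) x) - eta / 2 * Gn.
  move=> I; exact: (stepF Hconv Hprox Heta Hdesc (v I) Hx).
have Hc2 := coef2. have Hc0 := Hcst.
have HJ : forall I, / INR n ^ b * \big[Rplus/R0]_(J : {ffun 'I_b -> 'I_n})
      Phi (stepf gf px eta (x, al) (Some (I, J)))
    <= favg f x + h x + eta / 2 * norm2 (vsub (gavg gf x) (v I)) - eta / 2 * Gn + cst * (1 - p0 / 2) * S.
  move=> I.
  have E : forall J : {ffun 'I_b -> 'I_n}, Phi (stepf gf px eta (x, al) (Some (I, J))) =
     favg f (y I) + h (y I) + cst * (/ INR n * \big[Rplus/R0]_i norm2 (vsub (y I) (if [exists k, J k == i] then x else al i))).
    by move=> J.
  rewrite (eq_bigr _ (fun J _ => E J)) sumD sum_ffc sumZ.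
  have HP := P2 x (y I) al Hn Hb Hbn.
  rewrite -/p0 in HP.
  have HP' : cst * (/ INR n ^ b * \big[Rplus/R0]_(J : {ffun 'I_b -> 'I_n})
     (/ INR n * \big[Rplus/R0]_i norm2 (vsub (y I) (if [exists k, J k == i] then x else al i))))
     <= cst * (2 / p0 * norm2 (vsub (y I) x) + (1 - p0 / 2) * S).
    exact: Rmult_le_compat_l.
  have Hny := norm2_ge0 (vsub (y I) x).
  have E2 : / INR n ^ b * (INR n ^ b * (favg f (y I) + h (y I)) + cst *
      \big[Rplus/R0]_(J : {ffun 'I_b -> 'I_n}) (/ INR n * \big[Rplus/R0]_i norm2 (vsub (y I) (if [exists k, J k == i] then x else al i))))
    = favg f (y I) + h (y I) + cst * (/ INR n ^ b * \big[Rplus/R0]_(J : {ffun 'I_b -> 'I_n})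
     (/ INR n * \big[Rplus/R0]_i norm2 (vsub (y I) (if [exists k, J k == i] then x else al i)))) by field; lra.
  rewrite E2.
  have := HF I.
  have : (L / 2 - 1 / (2 * eta) + cst * (2 / p0)) * norm2 (vsub (y I) x) <= 0 by nra.
  nra.
have HP3 := P3 x al Hn Hb Hs2.
have HS : S = / INR n * \big[Rplus/R0]_i norm2 (vsub x (al i)) by [].
rewrite -HS in HP3.
set SI := \big[Rplus/R0]_(I : {ffun 'I_b -> 'I_n}) norm2 (vsub (gavg gf x) (v I)) in HP3.
set C := favg f x + h x - eta / 2 * Gn + cst * (1 - p0 / 2) * S.
have H1 : \big[Rplus/R0]_(I : {ffun 'I_b -> 'I_n}) (/ INR n ^ b * \big[Rplus/R0]_(J : {ffun 'I_b -> 'I_n})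
      Phi (stepf gf px eta (x, al) (Some (I, J)))) <= INR n ^ b * C + eta / 2 * SI.
  apply: Rle_trans; first exact: (sum_le HJ).
  rewrite (eq_bigr (fun I => C + eta / 2 * norm2 (vsub (gavg gf x) (v I)))); last by move=> I _; rewrite /C; ring.
  rewrite sumD sum_ffc sumZ; exact: Rle_refl.
rewrite avgD_split.
have HNi : 0 < / INR n ^ b by apply: Rinv_0_lt_compat.
have H2 := Rmult_le_compat_l _ _ _ (Rlt_le _ _ HNi) H1.
have E3 : / INR n ^ b * (INR n ^ b * C + eta / 2 * SI) = C + eta / 2 * (/ INR n ^ b * SI) by field; lra.
rewrite E3 in H2.
have HPhi : Phi (x, al) = favg f x + h x + cst * S by [].
rewrite HPhi.
have Hc1 := coef1.
have He := Heta.
have H4 : eta / 2 * (/ INR n ^ b * SI) <= eta / 2 * (L ^ 2 / INR b * S) by apply: Rmult_le_compat_l; lra.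
rewrite /C in H2.
have E5 : cst * (1 - p0 / 2) * S + eta / 2 * (L ^ 2 / INR b * S) = cst * S.
  by rewrite -[eta / 2 * (L ^ 2 / INR b * S)]Rmult_assoc -Rmult_plus_distr_r Hc1.
apply: Rle_trans; first exact: (Rplus_le_compat_r (eta / 2 * Gn) _ _ H2).
lra.
Qed.

Variables (x0 xstar : vec d) (T : nat).
Hypotheses (Hx0 : D x0) (Hxs : D xstar)
  (Hmin : forall y, D y -> favg f xstar + h xstar <= favg f y + h y) (HT : (1 <= T)%N).

Notation st w t := (@saga_state n d gf b px eta x0 w t).
Let Gn (s : vec d * ('I_n -> vec d)) := norm2 (grad_map gf px eta s.1).

Lemma inv_D w t : D (st w t).1.
Proof.
elim: t => [|t IH] //.
rewrite saga_S. move: IH. case: (st w t) => x al /= Hx.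
case: (w t) => [[I J]|] //=.
by case: (Hprox (vsub x (vscal eta (vadd (vscal (/ INR b) (vsum (fun k : 'I_b => vsub (gf (I k) x) (gf (I k) (al (I k))))))
   (vscal (/ INR n) (vsum (fun i : 'I_n => gf i (al i)))))))).
Qed.

Lemma Phi_lb s : D s.1 -> favg f xstar + h xstar <= Phi s.
Proof.
move=> Hs. rewrite /Phi. have := Hmin Hs. have := Hcst.
have : 0 <= Sf s.
  rewrite /Sf; apply: Rmult_le_pos; last by apply: sum_ge0 => i; apply: norm2_ge0.
  apply: Rlt_le; apply: Rinv_0_lt_compat; have := Hn'; lra.
nra.
Qed.

Lemma tele t : Ex t (fun w => Phi (st w t)) + eta / 2 * \big[Rplus/R0]_(a < t) Ex a (fun w => Gn (st w a))
  <= Phi (x0, fun _ => x0).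
Proof.
elim: t => [|t IH].
  rewrite big_ord0 /=. lra.
have Hsplit : \big[Rplus/R0]_(a < t.+1) Ex a (fun w => Gn (st w a)) =
   \big[Rplus/R0]_(a < t) Ex a (fun w => Gn (st w a)) + Ex t (fun w => Gn (st w t)).
  by rewrite big_ord_recr.
rewrite Hsplit.
rewrite (@Ex_step n d b gf px eta x0 t Phi).
have H : forall w : nat -> option (draw n b), avgD (fun dl : draw n b => Phi (stepf gf px eta (st w t) (Some dl))) <=
    Phi (st w t) + (- (eta / 2)) * Gn (st w t).
  move=> w. have := inv_D w t. case: (st w t) => x al /= Hx.
  have := onestep al Hx. rewrite /Gn /=. lra.
have H2 := Ex_mono Hn t H.
rewrite Ex_plus Ex_scal in H2.
lra.
Qed.

Lemma final : expected_sq_grad_map gf b T px eta x0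
  <= 2 * L * ((favg f x0 + h x0) - (favg f xstar + h xstar)) / (rho * (1 - 2 * rho) * INR T).
Proof.
rewrite /expected_sq_grad_map.
have HND : 0 < NDr n b by apply: NDr_pos.
have HNT : 0 < NDr n b ^ T by apply: pow_lt.
have HTp : 0 < INR T by apply: lt_0_INR; apply/ltP.
have Hc : INR #|{: sample_space n b T}| = NDr n b ^ T.
  have := @SS_Ex n b Hn T (fun _ => 1). rewrite Ex_const // sum_const !Rmult_1_r. exact.
rewrite Hc exchange_big /=.
have Ha : forall a : 'I_T, \big[Rplus/R0]_(om : sample_space n b T)
    norm2 (grad_map gf px eta (st (draws_of om) a).1) = NDr n b ^ T * Ex a (fun w => Gn (st w a)).
  move=> a; rewrite (@SS_Ex n b Hn T (fun w => Gn (st w a))).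
  by rewrite (Ex_st b gf px eta x0 Hn (fun s => Gn s) (ltnW (ltn_ord a))).
rewrite (eq_bigr _ (fun a _ => Ha a)) sumZ.
set Sm := \big[Rplus/R0]_(a < T) Ex a (fun w => Gn (st w a)).
have Ht := tele T.
have Hlb : favg f xstar + h xstar <= Ex T (fun w => Phi (st w T)).
  rewrite -(Ex_const b Hn T (favg f xstar + h xstar)).
  apply: Ex_mono => // w. apply: Phi_lb. exact: inv_D.
have H0 : Phi (x0, fun _ => x0) = favg f x0 + h x0.
  rewrite /Phi /Sf /=.
  rewrite (eq_bigr (fun _ => 0)); last by move=> i _; rewrite /norm2 /dot /vsub; apply: big1 => k _; ring.
  rewrite sum_const; ring.
rewrite H0 -/Sm in Ht.
have He := Heta.
have Hsm : Sm <= 2 / eta * (favg f x0 + h x0 - (favg f xstar + h xstar)).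
  apply: (Rmult_le_reg_l (eta / 2)); first lra.
  have -> : eta / 2 * (2 / eta * (favg f x0 + h x0 - (favg f xstar + h xstar))) =
     favg f x0 + h x0 - (favg f xstar + h xstar) by field; lra.
  lra.
have HD0 : 0 <= favg f x0 + h x0 - (favg f xstar + h xstar) by have := Hmin Hx0; lra.
have E1 : / (NDr n b ^ T * INR T) * (NDr n b ^ T * Sm) = Sm / INR T by field; lra.
rewrite E1.
have E2 : 2 / eta = 2 * L / rho by rewrite /eta; field; lra.
rewrite E2 in Hsm.
apply: (Rmult_le_reg_r (INR T)) => //.
have -> : Sm / INR T * INR T = Sm by field; lra.
have -> : 2 * L * (favg f x0 + h x0 - (favg f xstar + h xstar)) / (rho * (1 - 2 * rho) * INR T) * INR T
   = 2 * L / rho * (favg f x0 + h x0 - (favg f xstar + h xstar)) * / (1 - 2 * rho) by field; lra.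
have Hq : 1 <= / (1 - 2 * rho).
  rewrite -Rinv_1; apply: Rinv_le_contravar; lra.
have : 0 <= 2 * L / rho * (favg f x0 + h x0 - (favg f xstar + h xstar)).
  apply: Rmult_le_pos => //; apply: Rlt_le; apply: Rdiv_lt_0_compat; lra.
nra.
Qed.
End Main.

Unset Implicit Arguments.
Set Strict Implicit.

Theorem theorem6 (n d b T : nat) (Hn : (1 <= n)%nat) (Hd : (1 <= d)%nat)
  (Hb : (1 <= b)%nat) (Hbn : (b <= n)%nat) (HT : (1 <= T)%nat)
  (f : 'I_n -> vec d -> R) (gf : 'I_n -> vec d -> vec d) (L : R) (HL : 0 < L)
  (Hgrad : forall i, is_gradient (f i) (gf i))
  (Hsmooth : forall i x y, norm (vsub (gf i x) (gf i y)) <= L * norm (vsub x y))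
  (D : vec d -> Prop) (h : vec d -> R)
  (Hproper : ext_proper D) (Hconv : ext_convex D h) (Hclosed : vclosed_set D)
  (Hlsc : ext_lsc D h)
  (xstar : vec d) (Hxs : D xstar)
  (Hmin : forall y, D y -> favg f xstar + h xstar <= favg f y + h y)
  (rho : R) (Hrho : 0 < rho < 1 / 2)
  (Hcond : 16 * INR n ^ 2 * rho ^ 2 / INR b ^ 3 + rho <= 1)
  (px : vec d -> vec d) (Hprox : is_prox D h (rho / L) px)
  (x0 : vec d) (Hx0 : D x0) :
  expected_sq_grad_map gf b T px (rho / L) x0
    <= 2 * L * ((favg f x0 + h x0) - (favg f xstar + h xstar))
       / (rho * (1 - 2 * rho) * INR T).
Proof.
exact: (final Hn Hb Hbn HL Hgrad Hsmooth Hconv Hrho Hcond Hprox Hx0 Hmin HT).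
Qed.
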